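(* Let $K$ be an $n$-dimensional oriented, well-centered, manifold-like simplicial complex with boundary $\partial K$ and circumcentric dual complex, and let $p,q$ be positive integers with $p+q=n+1$. Let $\tilde{\mathcal F}^d_{p,q}=\Omega_d^p(K)\times\Omega_d^q(\star_{\mathrm i}K)\times\Omega_d^{n-p}(\partial(\star K))$ and $\tilde{\mathcal E}^d_{p,q}=\Omega_d^{n-p}(\star_{\mathrm i}K)\times\Omega_d^{n-q}(K)\times\Omega_d^{n-q}(\partial K)$, with the symmetric bilinear form $$\langle\!\langle(f_p^1,\hat f_q^1,\hat f_b^1,\hat e_p^1,e_q^1,e_b^1),(f_p^2,\hat f_q^2,\hat f_b^2,\hat e_p^2,e_q^2,e_b^2)\rangle\!\rangle_{\tilde d}=\langle\hat e_p^1\wedge f_p^2+e_q^1\wedge\hat f_q^2+\hat e_p^2\wedge f_p^1+e_q^2\wedge\hat f_q^1,K\rangle+\langle e_b^1\wedge\hat f_b^2+e_b^2\wedge\hat f_b^1,\partial K\rangle .$$ Define $\tilde{\mathcal D}_d\subset\tilde{\mathcal F}^d_{p,q}\times\tilde{\mathcal E}^d_{p,q}$ as the set of $(f_p,\hat f_q,\hat f_b,\hat e_p,e_q,e_b)$ such that $$f_p=(-1)^{pq+1}\mathbf d e_q,\qquad \hat f_q=\mathbf d_{\mathrm i}\hat e_p+\mathbf d_{\mathrm b}\hat f_b,\qquad e_b=(-1)^p\,e_q|_{\partial K}.$$ Then $\tilde{\mathcal D}_d=\tilde{\mathcal D}_d^{\perp}$ with respect to $\langle\!\langle\cdot,\cdot\rangle\!\rangle_{\tilde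 d}$, i.e. $\tilde{\mathcal D}_d$ is a Dirac structure.
   Context: Setting. $K$ is an $n$-dimensional manifold-like simplicial complex (every simplex is a face of some $n$-simplex), oriented ($n$-simplices sharing an $(n-1)$-face are coherently oriented, lower-dimensional simplices are individually oriented) and well-centered (every simplex contains its circumcenter in its interior). $\partial K$ is the $(n-1)$-dimensional boundary subcomplex: the $(n-1)$-simplices that are faces of exactly one $n$-simplex, together with all their faces. For simplices $\sigma^{j-1}\prec\sigma^{j}$ let $[\sigma^{j-1}:\sigma^{j}]\in\{\pm1\}$ be the coefficient of $\sigma^{j-1}$ in $\partial[v_0,\dots,v_j]=\sum_i(-1)^i[v_0,\dots,\widehat{v_i},\dots,v_j]$. Dual cells. Each simplex $\sigma^j\in K$ has a circumcentric interior dual $(n-j)$-cell $\star_{\mathrm i}\sigma^j$; each $\tau^j\in\partial K$ has a boundary dual $(n-1-j)$-cell $\star_{\mathrm b}\tau^j$ (its circumcentric dual within $\partial K$). Discrete forms. $\Omega_d^j(K)$ (resp. $\Omega_d^j(\partial K)$): real functions on the $j$-simplices of $K$ (resp. $\partial K$); $\Omega_d^m(\star_{\mathrm i}K)$: real functions on interior dual $m$-cells $\star_{\mathrm i}\sigma^{n-m}$; $\Omega_d^m(\partial(\star K))$: real functions on boundary dual $m$-cells $\star_{\mathrm b}\tau^{n-1-m}$, $\tau\in\partial K$. For primal $\alpha$, $\alpha|_{\partial K}$ is its restriction to simplices of $\partial K$. Derivatives. Primal: $(\mathbf d\alpha)(\sigma^{j})=\sum_{\sigma^{j-1}\prec\sigma^{j}}[\sigma^{j-1}:\sigma^{j}]\alpha(\sigma^{j-1})$.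 Dual: for $\hat\beta_{\mathrm i}\in\Omega_d^{m}(\star_{\mathrm i}K)$, $\hat\beta_{\mathrm b}\in\Omega_d^{m}(\partial(\star K))$, $m\le n-1$, with $j=n-m$: $(\mathbf d_{\mathrm i}\hat\beta_{\mathrm i})(\star_{\mathrm i}\sigma^{j-1})=(-1)^{j}\sum_{\sigma^{j}\succ\sigma^{j-1}}[\sigma^{j-1}:\sigma^{j}]\hat\beta_{\mathrm i}(\star_{\mathrm i}\sigma^{j})$, and $(\mathbf d_{\mathrm b}\hat\beta_{\mathrm b})(\star_{\mathrm i}\sigma^{j-1})=(-1)^{j-1}\hat\beta_{\mathrm b}(\star_{\mathrm b}\sigma^{j-1})$ if $\sigma^{j-1}\in\partial K$, $0$ otherwise; both lie in $\Omega_d^{m+1}(\star_{\mathrm i}K)$. Wedge pairings (extended bilinearly). For $\alpha\in\Omega_d^j(K)$, $\hat\beta\in\Omega_d^{n-j}(\star_{\mathrm i}K)$: $\langle\alpha\wedge\hat\beta,K\rangle=\sum_{\sigma^j\in K}\alpha(\sigma^j)\hat\beta(\star_{\mathrm i}\sigma^j)$, $\langle\hat\beta\wedge\alpha,K\rangle=(-1)^{j(n-j)}\langle\alpha\wedge\hat\beta,K\rangle$. For $\alpha\in\Omega_d^j(\partial K)$, $\hat\gamma\in\Omega_d^{n-1-j}(\partial(\star K))$: $\langle\alpha\wedge\hat\gamma,\partial K\rangle=\sum_{\tau^j\in\partial K}\alpha(\tau^j)\hat\gamma(\star_{\mathrm b}\tau^j)$, $\langle\hat\gamma\wedge\alpha,\partial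 K\rangle=(-1)^{j(n-1-j)}\langle\alpha\wedge\hat\gamma,\partial K\rangle$. A Dirac structure is a linear subspace $\mathcal D\subset\mathcal F\times\mathcal E$ with $\mathcal D=\mathcal D^\perp$ for the given symmetric bilinear form. *)

(* Defs.v *)
From HB Require Import structures.
From mathcomp Require Import all_boot all_order all_algebra.
From mathcomp Require Import reals.
Set Implicit Arguments. Unset Strict Implicit. Unset Printing Implicit Defensive.
Import Order.TTheory GRing.Theory Num.Theory.
Local Open Scope ring_scope.

Section DEC.
Variables (R : realType) (V : finType).

Definition simp (K : {set {set V}}) (j : nat) : {set {set V}} :=
  [set s in K | #|s| == j.+1]%N.

Definition abstract_complex (K : {set {set V}}) : Prop :=
  (forall s : {set V}, s \in K -> s != set0) /\
  (forall s t : {set V}, s \in K -> t \subset s -> t != set0 -> t \in K).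

Definition affine_indep (N : nat) (pos : V -> 'rV[R]_N) (s : {set V}) : Prop :=
  forall c : V -> R, \sum_(v in s) c v = 0 -> \sum_(v in s) c v *: pos v = 0 ->
    forall v, v \in s -> c v = 0.

Definition in_hull (N : nat) (pos : V -> 'rV[R]_N) (s : {set V}) (x : 'rV[R]_N) :=
  exists l : V -> R, (forall v, v \in s -> 0 <= l v) /\ \sum_(v in s) l v = 1 /\
    x = \sum_(v in s) l v *: pos v.

(* geometric simplicial complex: simplices are affinely independent and any two
   simplices meet in a common face (possibly empty) *)
Definition geometric_complex (N : nat) (pos : V -> 'rV[R]_N) (K : {set {set V}}) :=
  abstract_complex K /\ (forall s, s \in K -> affine_indep pos s) /\
  (forall s t x, s \in K -> t \in K -> in_hull pos s x -> in_hull pos t x ->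
     in_hull pos (s :&: t) x).

Definition sqdist (N : nat) (x y : 'rV[R]_N) : R := \sum_(i < N) (x 0 i - y 0 i) ^+ 2.

(* every simplex contains its circumcenter (the point of its affine hull
   equidistant from its vertices) in its (relative) interior *)
Definition well_centered (N : nat) (pos : V -> 'rV[R]_N) (K : {set {set V}}) :=
  forall s, s \in K -> exists l : V -> R,
    (forall v, v \in s -> 0 < l v) /\ \sum_(v in s) l v = 1 /\
    forall v w, v \in s -> w \in s ->
      sqdist (\sum_(u in s) l u *: pos u) (pos v) =
      sqdist (\sum_(u in s) l u *: pos u) (pos w).

Definition manifold_like (n : nat) (K : {set {set V}}) : Prop :=
  simp K n != set0 /\ forall s, s \in K -> exists2 t, t \in simp K n & s \subset t.

Definition orientation (K : {set {set V}}) (ord : {set V} -> seq V) : Prop :=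
  forall s, s \in K -> perm_eq (ord s) (enum s).

(* parity of the permutation between two orderings a, b of the same vertex set *)
Definition relsign (a b : seq V) : R :=
  (-1) ^+ (\sum_(x <- a) \sum_(y <- a)
             ((index x a < index y a) && (index y b < index x b)))%N.

(* [t : s] : coefficient of (the oriented) t in the boundary of (the oriented) s,
   computed from d[v0..vj] = sum_i (-1)^i [v0..^vi..vj]; 0 if t is not a facet *)
Definition incidence (ord : {set V} -> seq V) (t s : {set V}) : R :=
  if (t \subset s) && (#|s| == #|t|.+1)%N then
    (-1) ^+ (find (fun x => x \notin t) (ord s)) *
    relsign [seq x <- ord s | x \in t] (ord t)
  else 0.

Definition coherent (n : nat) (K : {set {set V}}) (ord : {set V} -> seq V) : Prop :=
  forall s1 s2 t, s1 \in simp K n -> s2 \in simp K n -> s1 != s2 ->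
    t \in simp K n.-1 -> t \subset s1 -> t \subset s2 ->
    incidence ord t s1 = - incidence ord t s2.

Definition bdry_facets (n : nat) (K : {set {set V}}) : {set {set V}} :=
  [set t in simp K n.-1 | #|[set s in simp K n | t \subset s]| == 1%N].

Definition bdry (n : nat) (K : {set {set V}}) : {set {set V}} :=
  [set t in K | [exists u in bdry_facets n K, t \subset u]].

(* ---------- discrete forms ----------
   A discrete form is a real function on cells; primal cells are simplices, the
   interior dual cell star_i s is indexed by s in K, the boundary dual cell star_b t is
   indexed by t in bdry K.  form_on S f : f lives on the cells indexed by S. *)
Definition form_on (S : {set {set V}}) (f : {ffun {set V} -> R}) : Prop :=
  forall s, s \notin S -> f s = 0.

Variables (n : nat) (K : {set {set V}}) (ord : {set V} -> seq V).

Definition pd (j : nat) (a : {ffun {set V} -> R}) : {ffun {set V} -> R} :=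
  [ffun s => if s \in simp K j.+1 then
               \sum_(t in simp K j) incidence ord t s * a t else 0].

(* d_i : Omega^m(star_i K) -> Omega^(m+1)(star_i K), with j = n - m *)
Definition d_i (m : nat) (b : {ffun {set V} -> R}) : {ffun {set V} -> R} :=
  [ffun t => if t \in simp K (n - m).-1 then
               (-1) ^+ (n - m) * \sum_(s in simp K (n - m)) incidence ord t s * b s
             else 0].

(* d_b : Omega^m(boundary of star K) -> Omega^(m+1)(star_i K), with j = n - m *)
Definition d_b (m : nat) (b : {ffun {set V} -> R}) : {ffun {set V} -> R} :=
  [ffun t => if t \in simp K (n - m).-1 then
               (if t \in bdry n K then (-1) ^+ (n - m).-1 * b t else 0)
             else 0].

Definition restr_bdry (a : {ffun {set V} -> R}) : {ffun {set V} -> R} :=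
  [ffun s => if s \in bdry n K then a s else 0].

(* <alpha /\ beta_hat, K> for alpha primal j-form, beta_hat dual (n-j)-form *)
Definition wedgePD (j : nat) (a b : {ffun {set V} -> R}) : R :=
  \sum_(s in simp K j) a s * b s.
(* <beta_hat /\ alpha, K> = (-1)^(j(n-j)) <alpha /\ beta_hat, K> *)
Definition wedgeDP (j : nat) (b a : {ffun {set V} -> R}) : R :=
  (-1) ^+ (j * (n - j)) * wedgePD j a b.
(* <alpha /\ gamma_hat, boundary K> for alpha primal j-form on the boundary *)
Definition wedgeB (j : nat) (a g : {ffun {set V} -> R}) : R :=
  \sum_(t in simp (bdry n K) j) a t * g t.

Record FE := mkFE { f_p : {ffun {set V} -> R}; fhat_q : {ffun {set V} -> R};
                    fhat_b : {ffun {set V} -> R}; ehat_p : {ffun {set V} -> R};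
                    e_q : {ffun {set V} -> R}; e_b : {ffun {set V} -> R} }.

Variables (p q : nat).

Definition inFE (x : FE) : Prop :=
  [/\ form_on (simp K p) (f_p x),
       form_on (simp K (n - q)) (fhat_q x)
     & form_on (simp (bdry n K) (n.-1 - (n - p))) (fhat_b x)]
  /\ [/\ form_on (simp K (n - (n - p))) (ehat_p x),
       form_on (simp K (n - q)) (e_q x)
     & form_on (simp (bdry n K) (n - q)) (e_b x)].

Definition pairing (x y : FE) : R :=
  wedgeDP p (ehat_p x) (f_p y) + wedgePD (n - q) (e_q x) (fhat_q y)
  + wedgeDP p (ehat_p y) (f_p x) + wedgePD (n - q) (e_q y) (fhat_q x)
  + (wedgeB (n - q) (e_b x) (fhat_b y) + wedgeB (n - q) (e_b y) (fhat_b x)).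

Definition Dirac_D (x : FE) : Prop :=
  [/\ inFE x,
      f_p x = [ffun s => (-1) ^+ (p * q + 1) * pd (n - q) (e_q x) s],
      fhat_q x = [ffun s => d_i (n - p) (ehat_p x) s + d_b (n - p) (fhat_b x) s]
    & e_b x = [ffun s => (-1) ^+ p * restr_bdry (e_q x) s]].

Definition Dirac_D_perp (x : FE) : Prop :=
  inFE x /\ forall y, Dirac_D y -> pairing x y = 0.

End DEC.

(* Main.v *)
Require Import Defs.
From HB Require Import structures.
From mathcomp Require Import all_boot all_order all_algebra.
From mathcomp Require Import reals zify ring lra.
Import Order.TTheory GRing.Theory Num.Theory.
Local Open Scope ring_scope.

Lemma bdryK {V : finType} {n : nat} {K : {set {set V}}} {t} :
  t \in bdry n K -> t \in K.
Proof. by rewrite inE => /andP[]. Qed.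

Lemma simpE (V : finType) (j : nat) (K : {set {set V}}) t :
  (t \in simp K j) = (t \in K) && (#|t| == j.+1)%N.
Proof. by rewrite /simp in_set. Qed.

Lemma simpB {V : finType} {n : nat} (j : nat) {K : {set {set V}}} {t} :
  t \in bdry n K -> (t \in simp (bdry n K) j) = (t \in simp K j).
Proof. move=> tb; by rewrite !simpE tb (bdryK tb). Qed.

Lemma simpB_bdry {V : finType} {n j : nat} {K : {set {set V}}} {t} :
  t \in simp (bdry n K) j -> t \in bdry n K.
Proof. by rewrite simpE => /andP[]. Qed.

Lemma sumB {R : realType} {V : finType} {n j : nat} {K : {set {set V}}}
  {e a : {ffun {set V} -> R}} {c : R} :
  \sum_(t in simp K j) e t * (if t \in bdry n K then c * a t else 0) =
  c * \sum_(t in simp (bdry n K) j) e t * a t.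
Proof.
rewrite big_distrr /= big_mkcond [RHS]big_mkcond /=; apply: eq_bigr => t _.
case tb: (t \in bdry n K).
  by rewrite (simpB j tb); case: ifP => _; rewrite ?mulr0 // mulrCA.
rewrite mulr0 if_same; case: ifP => //; by rewrite inE tb.
Qed.

Lemma pdE (R : realType) (V : finType) (K : {set {set V}}) ord j
  (a : {ffun {set V} -> R}) s : s \in simp K j.+1 ->
  pd K ord j a s = \sum_(t in simp K j) incidence R ord t s * a t.
Proof. by move=> hs; rewrite ffunE hs. Qed.

Lemma pd0 {R : realType} {V : finType} {K : {set {set V}}} {ord j}
  {a : {ffun {set V} -> R}} {s} : s \notin simp K j.+1 -> pd K ord j a s = 0.
Proof. by move=> hs; rewrite ffunE (negbTE hs). Qed.

Lemma d_iE {R : realType} {V : finType} {n} {K : {set {set V}}} {ord m j}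
  {b : {ffun {set V} -> R}} {t} : (n - m = j.+1)%N -> t \in simp K j ->
  d_i n K ord m b t =
  - ((-1) ^+ j * \sum_(s in simp K j.+1) incidence R ord t s * b s).
Proof. by move=> hm ht; rewrite ffunE hm /= ht exprS mulN1r mulNr. Qed.

Lemma d_i0 {R : realType} {V : finType} {n} {K : {set {set V}}} {ord m j}
  {b : {ffun {set V} -> R}} {t} : (n - m = j.+1)%N -> t \notin simp K j ->
  d_i n K ord m b t = 0.
Proof. by move=> hm ht; rewrite ffunE hm /= (negbTE ht). Qed.

Lemma d_bE {R : realType} {V : finType} {n} {K : {set {set V}}} {m j}
  {b : {ffun {set V} -> R}} {t} : (n - m = j.+1)%N -> t \in simp K j ->
  d_b n K m b t = (if t \in bdry n K then (-1) ^+ j * b t else 0).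
Proof. by move=> hm ht; rewrite ffunE hm /= ht. Qed.

Lemma d_b0 {R : realType} {V : finType} {n} {K : {set {set V}}} {m j}
  {b : {ffun {set V} -> R}} {t} : (n - m = j.+1)%N -> t \notin simp K j ->
  d_b n K m b t = 0.
Proof. by move=> hm ht; rewrite ffunE hm /= (negbTE ht). Qed.

Lemma duality {R : realType} {V : finType} {K : {set {set V}}} {ord j}
  {e h : {ffun {set V} -> R}} :
  \sum_(s in simp K j.+1) pd K ord j e s * h s =
  \sum_(t in simp K j) e t * \sum_(s in simp K j.+1) incidence R ord t s * h s.
Proof.
under eq_bigr => s hs do rewrite pdE // big_distrl.
rewrite exchange_big /=; apply: eq_bigr => t _; rewrite big_distrr /=.
by apply: eq_bigr => s _; ring.
Qed.

Definition rq {R : realType} {V : finType} n K ord p (x : FE R V) : {ffun {set V} -> R} :=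
  [ffun t => fhat_q x t - (d_i n K ord (n - p) (ehat_p x) t + d_b n K (n - p) (fhat_b x) t)].
Definition rf {R : realType} {V : finType} n K ord p q (x : FE R V) : {ffun {set V} -> R} :=
  [ffun s => f_p x s - (-1) ^+ (p * q + 1) * pd K ord (n - q) (e_q x) s].
Definition rb {R : realType} {V : finType} n K p (x : FE R V) : {ffun {set V} -> R} :=
  [ffun t => e_b x t - (-1) ^+ p * restr_bdry n K (e_q x) t].

Lemma restrE {R : realType} {V : finType} {n} {K : {set {set V}}}
  {a : {ffun {set V} -> R}} {t} :
  restr_bdry n K a t = if t \in bdry n K then a t else 0.
Proof. by rewrite ffunE. Qed.

Ltac genbig := repeat match goal with |- context [@bigop ?R ?I ?idx ?r ?f] =>
   let S := fresh "S" in set S := (@bigop R I idx r f); clearbody S end;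
  repeat match goal with |- context [@GRing.exp ?R ?x ?n] =>
   let S := fresh "E" in set S := (@GRing.exp R x n); clearbody S end.

Lemma sign_sc (R : realType) j k :
  (-1) ^+ (j.+1 * k) * (-1) ^+ (j.+1 * k.+1 + 1) = (-1) ^+ j :> R.
Proof.
rewrite -exprD -signr_odd -[RHS]signr_odd; congr (_ ^+ (nat_of_bool _)).
have -> : (j.+1 * k + (j.+1 * k.+1 + 1) = j + (j.+1 * k + 1).*2)%N.
  rewrite -addnn mulnS; lia.
by rewrite oddD odd_double addbF.
Qed.

Lemma pairingE (R : realType) (V : finType) n (K : {set {set V}}) ord j k
  (hnq : (n - k.+1 = j)%N) (hnp : (n - j.+1 = k)%N) (hnnp : (n - k = j.+1)%N)
  (x y : FE R V) :
  f_p y = [ffun s => (-1) ^+ (j.+1 * k.+1 + 1) * pd K ord (n - k.+1) (e_q y) s] ->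
  fhat_q y = [ffun s => d_i n K ord (n - j.+1) (ehat_p y) s
                        + d_b n K (n - j.+1) (fhat_b y) s] ->
  e_b y = [ffun s => (-1) ^+ j.+1 * restr_bdry n K (e_q y) s] ->
  pairing n K j.+1 k.+1 x y =
    \sum_(t in simp K j) e_q y t * rq n K ord j.+1 x t
  + (-1) ^+ (j.+1 * k) * \sum_(s in simp K j.+1) ehat_p y s * rf n K ord j.+1 k.+1 x s
  + \sum_(t in simp (bdry n K) j) fhat_b y t * rb n K j.+1 x t.
Proof.
move=> Hf Hfh Heb.
have hm : (n - (n - j.+1) = j.+1)%N by rewrite hnp.
rewrite hnq hnp in Hf Hfh.
have hsc := sign_sc R j k.
rewrite /pairing /wedgeDP /wedgePD /wedgeB hnp hnq.
have h1 : \sum_(s in simp K j.+1) f_p y s * ehat_p x s =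
  (-1) ^+ (j.+1 * k.+1 + 1) * \sum_(t in simp K j) e_q y t *
        \sum_(s in simp K j.+1) incidence R ord t s * ehat_p x s.
  rewrite Hf; under eq_bigr => s _ do rewrite ffunE -mulrA.
  by rewrite -big_distrr duality.
have h2 : \sum_(t in simp K j) e_q x t * fhat_q y t =
  - (-1) ^+ j * \sum_(s in simp K j.+1) pd K ord j (e_q x) s * ehat_p y s
  + (-1) ^+ j * \sum_(t in simp (bdry n K) j) e_q x t * fhat_b y t.
  rewrite -sumB duality big_distrr -big_split /=; apply: eq_bigr => t ht.
  rewrite Hfh ffunE (d_iE hnnp ht) (d_bE hnnp ht); genbig; case: ifP => _; ring.
have h6 : \sum_(t in simp (bdry n K) j) e_b y t * fhat_b x t =
  - (-1) ^+ j * \sum_(t in simp (bdry n K) j) e_q y t * fhat_b x t.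
  rewrite Heb big_distrr /=; apply: eq_bigr => t ht.
  by rewrite !ffunE (simpB_bdry ht) exprS /=; genbig; ring.
have r1 : \sum_(t in simp K j) e_q y t * rq n K ord j.+1 x t =
  \sum_(t in simp K j) e_q y t * fhat_q x t
  + (-1) ^+ j * \sum_(t in simp K j) e_q y t *
        \sum_(s in simp K j.+1) incidence R ord t s * ehat_p x s
  - (-1) ^+ j * \sum_(t in simp (bdry n K) j) e_q y t * fhat_b x t.
  rewrite -sumB big_distrr -big_split -sumrB /=; apply: eq_bigr => t ht.
  by rewrite ffunE (d_iE hm ht) (d_bE hm ht); genbig; case: ifP => _; ring.
have r2 : \sum_(s in simp K j.+1) ehat_p y s * rf n K ord j.+1 k.+1 x s =
  \sum_(s in simp K j.+1) f_p x s * ehat_p y s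
  - (-1) ^+ (j.+1 * k.+1 + 1) * \sum_(s in simp K j.+1) pd K ord j (e_q x) s * ehat_p y s.
  rewrite big_distrr -sumrB /=; apply: eq_bigr => s _.
  by rewrite ffunE hnq; genbig; ring.
have r3 : \sum_(t in simp (bdry n K) j) fhat_b y t * rb n K j.+1 x t =
  \sum_(t in simp (bdry n K) j) e_b x t * fhat_b y t
  + (-1) ^+ j * \sum_(t in simp (bdry n K) j) e_q x t * fhat_b y t.
  rewrite big_distrr -big_split /=; apply: eq_bigr => t ht.
  by rewrite !ffunE (simpB_bdry ht) exprS /=; genbig; ring.
rewrite h1 h2 h6 r1 r2 r3 -hsc.
ring.
Qed.

Theorem theorem3 (R : realType) (V : finType) (N : nat) (pos : V -> 'rV[R]_N)
  (K : {set {set V}}) (ord : {set V} -> seq V) (n p q : nat) :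
  geometric_complex pos K -> well_centered pos K -> manifold_like n K ->
  orientation K ord -> coherent R n K ord ->
  (0 < p)%N -> (0 < q)%N -> (p + q = n + 1)%N ->
  forall x : FE R V,
    Dirac_D n K ord p q x <-> Dirac_D_perp n K ord p q x.
Proof.
move=> _ _ _ _ _ p0 q0 hpq x.
case: p p0 hpq => [//|j] _; case: q q0 => [//|k] _ hpq.
have hnq : (n - k.+1 = j)%N by lia.
have hnp : (n - j.+1 = k)%N by lia.
have hnnp : (n - k = j.+1)%N by lia.
have hnb : (n.-1 - k = j)%N by lia.
have hm : (n - (n - j.+1) = j.+1)%N by rewrite hnp.
have hsq : (-1) ^+ (j.+1 * k) * (-1) ^+ (j.+1 * k) = 1 :> R.
  by rewrite -exprD -signr_odd addnn odd_double.
split.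
  move=> [hx hf hfh heb]; split=> // y [hy Hf Hfh Heb].
  rewrite (@pairingE R V n K ord j k hnq hnp hnnp x y Hf Hfh Heb).
  have -> : \sum_(t in simp K j) e_q y t * rq n K ord j.+1 x t = 0.
    by apply: big1 => t _; rewrite ffunE hfh ffunE subrr mulr0.
  have -> : \sum_(s in simp K j.+1) ehat_p y s * rf n K ord j.+1 k.+1 x s = 0.
    by apply: big1 => t _; rewrite ffunE hf ffunE subrr mulr0.
  have -> : \sum_(t in simp (bdry n K) j) fhat_b y t * rb n K j.+1 x t = 0.
    by apply: big1 => t _; rewrite ffunE heb ffunE subrr mulr0.
  by rewrite mulr0 !addr0.
move=> [hx hperp].
have hx' := hx; rewrite /inFE hnp hnq hnnp hnb in hx'.
have [[hfx hfhx hfbx] [hehx heqx hebx]] := hx'.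
have Sq : form_on (simp K j) (rq n K ord j.+1 x).
  by move=> t ht; rewrite ffunE hfhx // (d_i0 hm ht) (d_b0 hm ht) addr0 subr0.
have Sf : form_on (simp K j.+1) (rf n K ord j.+1 k.+1 x).
  by move=> t ht; rewrite ffunE hfx // hnq (pd0 ht) mulr0 subr0.
have Sb : form_on (simp (bdry n K) j) (rb n K j.+1 x).
  move=> t ht; rewrite !ffunE hebx //; case: ifP => tb; last by rewrite mulr0 subr0.
  by rewrite (simpB j tb) in ht; rewrite heqx // mulr0 subr0.
pose eh := [ffun s => (-1) ^+ (j.+1 * k) * rf n K ord j.+1 k.+1 x s].
pose y := mkFE
  [ffun s => (-1) ^+ (j.+1 * k.+1 + 1) * pd K ord (n - k.+1) (rq n K ord j.+1 x) s]
  [ffun s => d_i n K ord (n - j.+1) eh s + d_b n K (n - j.+1) (rb n K j.+1 x) s]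
  (rb n K j.+1 x) eh (rq n K ord j.+1 x)
  [ffun s => (-1) ^+ j.+1 * restr_bdry n K (rq n K ord j.+1 x) s].
have Dy : Dirac_D n K ord j.+1 k.+1 y.
  split => //; rewrite /inFE hnp hnq hnnp hnb; split; split.
  - by move=> s hs; rewrite ffunE hnq (pd0 hs) mulr0.
  - by move=> t ht; rewrite ffunE (d_i0 hm ht) (d_b0 hm ht) addr0.
  - exact: Sb.
  - by move=> s hs; rewrite ffunE Sf // mulr0.
  - exact: Sq.
  - move=> t ht; rewrite ffunE restrE; case: ifP => tb; last by rewrite mulr0.
    by rewrite (simpB j tb) in ht; rewrite Sq // mulr0.
have := hperp y Dy.
have [_ Hf Hfh Heb] := Dy.
rewrite (@pairingE R V n K ord j k hnq hnp hnnp x y Hf Hfh Heb) /=.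
have -> : (-1) ^+ (j.+1 * k) *
    \sum_(s in simp K j.+1) eh s * rf n K ord j.+1 k.+1 x s =
    \sum_(s in simp K j.+1) rf n K ord j.+1 k.+1 x s * rf n K ord j.+1 k.+1 x s.
  by rewrite big_distrr; apply: eq_bigr => s _; rewrite /= /eh ffunE !mulrA hsq mul1r.
move=> H0.
have sq0 : forall (I : finType) (P : pred I) (F : I -> R),
    0 <= \sum_(i | P i) F i * F i.
  by move=> I P F; apply: sumr_ge0 => i _; rewrite -expr2 sqr_ge0.
have zero_of : forall (P : pred {set V}) (F : {ffun {set V} -> R}),
    \sum_(i | P i) F i * F i = 0 -> forall i, P i -> F i = 0.
  move=> P F hs i hi.
  have nn : forall i, P i -> 0 <= F i * F i by move=> i0 _; rewrite -expr2 sqr_ge0.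
  have h := psumr_eq0P nn hs hi.
  by move/eqP: h; rewrite mulf_eq0 orbb => /eqP.
have A1 := sq0 _ (fun t => t \in simp K j) (rq n K ord j.+1 x).
have A2 := sq0 _ (fun t => t \in simp K j.+1) (rf n K ord j.+1 k.+1 x).
have A3 := sq0 _ (fun t => t \in simp (bdry n K) j) (rb n K j.+1 x).
have Z1 : forall t, rq n K ord j.+1 x t = 0.
  move=> t; case: (boolP (t \in simp K j)) => ht; last exact: Sq.
  by apply: (zero_of (fun t => t \in simp K j)) => //; lra.
have Z2 : forall t, rf n K ord j.+1 k.+1 x t = 0.
  move=> t; case: (boolP (t \in simp K j.+1)) => ht; last exact: Sf.
  by apply: (zero_of (fun t => t \in simp K j.+1)) => //; lra.
have Z3 : forall t, rb n K j.+1 x t = 0.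
  move=> t; case: (boolP (t \in simp (bdry n K) j)) => ht; last exact: Sb.
  by apply: (zero_of (fun t => t \in simp (bdry n K) j)) => //; lra.
split => //; apply/ffunP => s; rewrite ffunE; apply/eqP; rewrite -subr_eq0; apply/eqP.
- by have := Z2 s; rewrite ffunE.
- by have := Z1 s; rewrite ffunE.
- by have := Z3 s; rewrite ffunE.
Qed.
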